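(* Let $d\ge 1$ and let $\mathbf{X}$ and $\mathbf{Y}$ be $d$-dimensional random vectors. If $\mathbb{E}\, u(\mathbf{X}) > \mathbb{E}\, u(\mathbf{Y})$ for every $u \in \mathcal{U}$, then $\mathbf{X} \succ_{d} \mathbf{Y}$.
   Context: For $\mathbf{x},\mathbf{y}\in\mathbb{R}^d$ write $\mathbf{y}\preceq_p \mathbf{x}$ if $y_i\le x_i$ for all $i$, and say $\mathbf{x}$ Pareto dominates $\mathbf{y}$, written $\mathbf{x}\succ_p\mathbf{y}$, if $x_i\ge y_i$ for all $i$ and $x_i>y_i$ for some $i$. $\mathcal{U}$ denotes the class of strictly monotonically increasing functions $u:\mathbb{R}^d\to\mathbb{R}$, i.e. $\mathbf{x}\succ_p\mathbf{y}\implies u(\mathbf{x})>u(\mathbf{y})$. The CDF of a random vector $\mathbf{X}$ is $F_{\mathbf{X}}(\mathbf{x})=P(\mathbf{X}\preceq_p\mathbf{x})$. First-order stochastic dominance: $\mathbf{X}\succeq_{\mathrm{FSD}}\mathbf{Y}$ iff $F_{\mathbf{X}}(\mathbf{v})\le F_{\mathbf{Y}}(\mathbf{v})$ for all $\mathbf{v}\in\mathbb{R}^d$; strict first-order stochastic dominance $\mathbf{X}\succ_{\mathrm{FSD}}\mathbf{Y}$ means $\mathbf{X}\succeq_{\mathrm{FSD}}\mathbf{Y}$ and $F_{\mathbf{X}}(\mathbf{v})< F_{\mathbf{Y}}(\mathbf{v})$ for some $\mathbf{v}$ (the same definitions apply to real random variables, $d=1$). Distributional dominance: $\mathbf{X}\succ_{d}\mathbf{Y}$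 iff $\mathbf{X}\succeq_{\mathrm{FSD}}\mathbf{Y}$ and there is $i\in\{1,\dots,d\}$ such that the marginal $X_i$ strictly first-order stochastically dominates the marginal $Y_i$, $X_i\succ_{\mathrm{FSD}}Y_i$. All expectations appearing are assumed to exist. *)

(* Defs.v *)
From HB Require Import structures.
From mathcomp Require Import all_boot all_order all_algebra.
From mathcomp Require Import all_classical all_reals all_analysis.
Set Implicit Arguments. Unset Strict Implicit. Unset Printing Implicit Defensive.
Import Order.TTheory GRing.Theory Num.Theory.
Local Open Scope classical_set_scope.
Local Open Scope ring_scope.

Section Defs.
Variable R : realType.
Variable d : nat.

Definition pareto_le (y x : 'I_d -> R) : Prop := forall i, y i <= x i.

Definition pareto_dom (x y : 'I_d -> R) : Prop :=
  (forall i, y i <= x i) /\ exists i, y i < x i.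

(* u ∈ 𝒰 : strictly monotonically increasing *)
Definition strictly_increasing (u : ('I_d -> R) -> R) : Prop :=
  forall x y, pareto_dom x y -> u y < u x.

Variables (dT : measure_display) (T : measurableType dT).

Definition cdf_vec (P : probability T R) (X : T -> 'I_d -> R) (v : 'I_d -> R)
  : \bar R := P [set w | pareto_le (X w) v].

End Defs.

Section Defs1.
Variable R : realType.
Variables (dT : measure_display) (T : measurableType dT).

Definition cdf_real (P : probability T R) (Z : T -> R) (t : R) : \bar R :=
  P [set w | Z w <= t].
End Defs1.

Section Dominance.
Variable R : realType.
Variables (dT1 dT2 : measure_display) (T1 : measurableType dT1)
  (T2 : measurableType dT2) (P1 : probability T1 R) (P2 : probability T2 R).

Definition fsd_vec (d : nat) (X : T1 -> 'I_d -> R) (Y : T2 -> 'I_d -> R) : Prop :=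
  forall v, (cdf_vec P1 X v <= cdf_vec P2 Y v)%E.

Definition fsd_real (X : T1 -> R) (Y : T2 -> R) : Prop :=
  forall t, (cdf_real P1 X t <= cdf_real P2 Y t)%E.
Definition sfsd_real (X : T1 -> R) (Y : T2 -> R) : Prop :=
  fsd_real X Y /\ exists t, (cdf_real P1 X t < cdf_real P2 Y t)%E.

Definition dist_dom (d : nat) (X : T1 -> 'I_d -> R) (Y : T2 -> 'I_d -> R) : Prop :=
  fsd_vec X Y /\ exists i : 'I_d, sfsd_real (fun w => X w i) (fun w => Y w i).
End Dominance.

(* Main.v *)
Set Warnings "-notation-overridden,-ambiguous-paths,-notation-incompatible-prefix".
Set Implicit Arguments. Unset Strict Implicit.
Require Import Defs.
From HB Require Import structures.
From mathcomp Require Import all_boot all_order all_algebra.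
From mathcomp Require Import all_classical all_reals all_analysis.
From mathcomp Require Import measurable_realfun.
From mathcomp Require Import lra.
Import Order.TTheory GRing.Theory Num.Theory.
Local Open Scope classical_set_scope.
Local Open Scope ring_scope.

Section U0.
Variable R : realType.
Variable d : nat.

Definition wt (n : nat) : R := 1 / (2 ^ (n + 1))%:R.

Lemma wt_gt0 n : 0 < wt n.
Proof. by rewrite /wt divr_gt0 // ltr0n expn_gt0. Qed.

Definition ind (x : 'I_d -> R) (n : nat) : R :=
  if (unpickle n : option ('I_d * rat)) is Some (i, q)
  then (nat_of_bool (x i <= ratr q)%R)%:R else 0.

Definition term (x : 'I_d -> R) (n : nat) : \bar R := (wt n * ind x n)%:E.

Definition S (x : 'I_d -> R) : \bar R := (\sum_(n <oo) term x n)%E.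

Lemma ind_ge0 x n : 0 <= ind x n.
Proof. by rewrite /ind; case: unpickle => [[i q]|] //. Qed.

Lemma ind_le1 x n : ind x n <= 1.
Proof. rewrite /ind; case: unpickle => [[i q]|] //; by case: (x i <= ratr q)%R. Qed.

Lemma term_ge0 x n : (0 <= term x n)%E.
Proof. by rewrite lee_fin mulr_ge0 ?ind_ge0 // ltW // wt_gt0. Qed.

Lemma S_ge0 x : (0 <= S x)%E.
Proof. by apply: nneseries_ge0 => n _ _; exact: term_ge0. Qed.

Lemma sum_wt : (\sum_(n <oo) (wt n)%:E = 1)%E.
Proof.
have := @cvg_geometric_eseries_half R 1 0.
rewrite expr0 divr1 => /cvg_lim <-.
by congr (limn _); apply/funext => n; rewrite /eseries; apply: eq_bigr => k _;
  rewrite /wt addn1.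
exact: ereal_hausdorff.
Qed.

Lemma S_le1 x : (S x <= 1)%E.
Proof.
rewrite -sum_wt; apply: lee_nneseries => [n _ _|n _]; first exact: term_ge0.
by rewrite lee_fin ler_piMr ?ind_le1 // ltW // wt_gt0.
Qed.

Lemma S_fin x : S x \is a fin_num.
Proof. by rewrite ge0_fin_numE ?S_ge0 // (le_lt_trans (S_le1 x)) ?ltry. Qed.

Definition u0 (x : 'I_d -> R) : R := - fine (S x).

Lemma u0_incr : strictly_increasing u0.
Proof.
move=> x y [le lt]; rewrite /u0 ltrN2.
have [j yxj] := lt.
have [q] := rat_in_itvoo yxj; rewrite in_itv /= => /andP[yq qx].
pose n0 := pickle (j, q).
have hu : unpickle n0 = Some (j, q) by rewrite pickleK.
have indy : ind y n0 = 1 by rewrite /ind hu (ltW yq).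
have indx : ind x n0 = 0 by rewrite /ind hu leNgt qx.
have mono n : (term x n <= term y n)%E.
  rewrite lee_fin; apply: ler_wpM2l; first exact/ltW/wt_gt0.
  rewrite /ind; case: unpickle => [[i r]|] //.
  case: (leP (x i) (ratr r)) => h; last by case: (y i <= ratr r)%R.
  by rewrite (le_trans (le i) h).
rewrite /S (@nneseriesD1 _ _ n0) //; last by move=> k _; exact: term_ge0.
rewrite [X in (_ < fine X)%R](@nneseriesD1 _ _ n0) //; last by move=> k _; exact: term_ge0.
have -> : term x n0 = 0%E by rewrite /term indx mulr0.
have -> : term y n0 = (wt n0)%:E by rewrite /term indy mulr1.
rewrite add0e.
have h1 : (\sum_(0 <= k <oo | true && (k != n0)) term x k <=
          \sum_(0 <= k <oo | true && (k != n0)) term y k)%E.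
  by apply: lee_nneseries => [k _ _|k _]; [exact: term_ge0| exact: mono].
have h2 : (\sum_(0 <= k <oo | true && (k != n0)) term y k <= S y)%E.
  rewrite [X in (_ <= X)%E]/S [X in (_ <= X)%E](@nneseriesD1 _ _ n0) //; last by move=> k _; exact: term_ge0.
  by rewrite leeDr // term_ge0.
have fy : (\sum_(0 <= k <oo | true && (k != n0)) term y k)%E \is a fin_num.
  rewrite ge0_fin_numE; last by apply: nneseries_ge0 => k _ _; exact: term_ge0.
  by rewrite (le_lt_trans h2) // (le_lt_trans (S_le1 y)) ?ltry.
have fx : (\sum_(0 <= k <oo | true && (k != n0)) term x k)%E \is a fin_num.
  rewrite ge0_fin_numE; last by apply: nneseries_ge0 => k _ _; exact: term_ge0.
  by rewrite (le_lt_trans h1) // -ge0_fin_numE // nneseries_ge0 // => k _ _; exact: term_ge0.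
rewrite -lte_fin fineK // fineK ?fin_numD ?fy //.
apply: (le_lt_trans h1); rewrite lteDr // lte_fin wt_gt0.
all: by [].
Qed.

End U0.

Section Meas.
Variable R : realType.
Variable d : nat.
Variables (dT : measure_display) (T : measurableType dT).
Variable P : probability T R.
Variable Z : T -> 'I_d -> R.
Hypothesis mZ : forall i, measurable_fun setT (fun w => Z w i).

Lemma mset i t : measurable [set w | Z w i <= t].
Proof.
have := mZ i measurableT (measurable_itv `]-oo, t]).
rewrite setTI; congr measurable; apply/seteqP; split => w /=;
  by rewrite in_itv /=.
Qed.

Definition Aset (n : nat) : set T :=
  if (unpickle n : option ('I_d * rat)) is Some (i, q)
  then [set w | Z w i <= ratr q] else set0.

Lemma mAset n : measurable (Aset n).
Proof. by rewrite /Aset; case: unpickle => [[i q]|] //; exact: mset. Qed.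

Lemma ind_Aset n w : ind (Z w) n = \1_(Aset n) w.
Proof.
rewrite indicE /ind /Aset; case: unpickle => [[i q]|]; last by rewrite in_set0.
by rewrite mem_setE.
Qed.

Lemma m_term n : measurable_fun setT (fun w => term (Z w) n : \bar R).
Proof.
rewrite (_ : (fun w => term (Z w) n) = EFin \o (fun w => wt R n * \1_(Aset n) w)); last first.
  by apply/funext => w; rewrite /term ind_Aset.
apply/measurable_EFinP; apply: measurable_funM => //.
exact: measurable_indic (mAset n).
Qed.

Lemma mS : measurable_fun setT (fun w => S (Z w) : \bar R).
Proof.
apply: (@ge0_emeasurable_sum _ _ _ _ (fun n w => term (Z w) n) xpredT).
  by move=> k x _ _; exact: term_ge0.
by move=> k _; exact: m_term.
Qed.

Lemma mu0 : measurable_fun setT (fun w => u0 (Z w)).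
Proof.
apply: measurableT_comp => //; apply: measurableT_comp => //.
exact: mS.
Qed.

Lemma int_u0 : P.-integrable setT (fun w => (u0 (Z w))%:E).
Proof.
apply: measurable_bounded_integrable => //.
- by rewrite (le_lt_trans (probability_le1 _ _)) ?ltry.
- apply: measurableT_comp => //; apply: measurableT_comp => //.
  exact: mS.
rewrite /bounded_near; near=> M => w _ /=.
have M1 : 1 <= M by near: M; exact: nbhs_pinfty_ge.
rewrite /u0 normrN ger0_norm ?fine_ge0 ?S_ge0 //.
rewrite (le_trans _ M1) // -lee_fin fineK ?S_fin //; exact: S_le1.
Unshelve. all: by end_near.
Qed.

Lemma int_u0E : (\int[P]_w (u0 (Z w))%:E =
  - \sum_(n <oo) ((wt R n)%:E * P (Aset n)))%E.
Proof.
have intS : P.-integrable setT (fun w => S (Z w)).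
  have := integrableN int_u0; apply: eq_integrable => // w _ /=.
  by rewrite /u0 opprK fineK ?S_fin.
rewrite (eq_integral (fun w => (-1)%:E * S (Z w))%E); last first.
  by move=> w _; rewrite /u0 EFinN fineK ?S_fin // mulN1e.
rewrite integralZl // mulN1e; congr (- _)%E.
rewrite integral_nneseries //; last first.
  - by move=> n x _; exact: term_ge0.
  - by move=> n; exact: m_term.
congr (limn _); apply/funext => m; apply: eq_bigr => n _.
rewrite (eq_integral (fun w => (wt R n)%:E * (\1_(Aset n) w)%:E))%E; last first.
  by move=> w _; rewrite /term ind_Aset EFinM.
by rewrite integralZl //; [rewrite integral_indic ?setIT //; exact: mAset
  | apply: integrable_indic; exact: mAset].
Qed.


Lemma ind_comp (D : set ('I_d -> R)) w :
  \1_D (Z w) = \1_([set w | D (Z w)]) w :> R.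
Proof. by rewrite !indicE; congr (_%:R); rewrite !mem_setE. Qed.

Lemma int_u (D : set ('I_d -> R)) (eps : R) :
  measurable [set w | D (Z w)] ->
  P.-integrable setT (fun w => (- \1_D (Z w) + eps * u0 (Z w))%:E) /\
  (\int[P]_w (- \1_D (Z w) + eps * u0 (Z w))%:E =
   (- fine (P [set w | D (Z w)]) + eps * fine (\int[P]_w (u0 (Z w))%:E))%:E)%E.
Proof.
move=> mA.
have e w : (- \1_D (Z w) + eps * u0 (Z w))%:E =
    ((-1)%:E * (\1_([set w | D (Z w)]) w)%:E + eps%:E * (u0 (Z w))%:E)%E.
  by rewrite ind_comp EFinD !EFinM mulN1e EFinN.
have i1 : P.-integrable setT (fun w => ((-1)%:E * (\1_([set w | D (Z w)]) w)%:E)%E).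
  apply: integrableZl => //.
  exact: (integrable_indic _ mA).
have i2 : P.-integrable setT (fun w => (eps%:E * (u0 (Z w))%:E)%E).
  by apply: integrableZl => //; exact: int_u0.
split.
  have := integrableD measurableT i1 i2; apply: eq_integrable => // w _.
rewrite (eq_integral (fun w => ((-1)%:E * (\1_([set w | D (Z w)]) w)%:E)%E + (eps%:E * (u0 (Z w))%:E)%E)%E); last first.
  by move=> w _; rewrite e.
rewrite integralD // integralZl //; last first.
  exact: (integrable_indic _ mA).
rewrite integral_indic // setIT integralZl; last exact: int_u0.
have fA : P [set w | D (Z w)] \is a fin_num by exact: fin_num_measure.
have fI : (\int[P]_w (u0 (Z w))%:E)%E \is a fin_num.
  exact: integrable_fin_num int_u0.
rewrite -(fineK fA) -(fineK fI) /=.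
have -> : P [set w | D (Z w)] = (fine (P [set w | D (Z w)]))%:E by rewrite fineK.
by rewrite -EFinM -EFinM -EFinD mulN1r.
exact: measurableT.
Qed.

End Meas.

Section Main.
Variable R : realType.
Variables (dT1 dT2 : measure_display) (T1 : measurableType dT1)
  (T2 : measurableType dT2) (P1 : probability T1 R) (P2 : probability T2 R).
Variable d : nat.
Variables (X : T1 -> 'I_d -> R) (Y : T2 -> 'I_d -> R).
Hypothesis mX : forall i, measurable_fun setT (fun w => X w i).
Hypothesis mY : forall i, measurable_fun setT (fun w => Y w i).
Hypothesis H : forall u : ('I_d -> R) -> R, strictly_increasing u ->
         P1.-integrable setT (fun w => (u (X w))%:E) ->
         P2.-integrable setT (fun w => (u (Y w))%:E) ->
         (\int[P1]_w (u (X w))%:E > \int[P2]_w (u (Y w))%:E)%E.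

Lemma key (D : set ('I_d -> R)) :
  (forall x y, pareto_dom x y -> D x -> D y) ->
  measurable [set w | D (X w)] -> measurable [set w | D (Y w)] ->
  (P1 [set w | D (X w)] <= P2 [set w | D (Y w)])%E.
Proof.
move=> down mA mB.
rewrite leNgt; apply/negP => ab.
set a := fine (P1 [set w | D (X w)]).
set b := fine (P2 [set w | D (Y w)]).
have ab' : b < a.
  rewrite -lte_fin /a /b !fineK //; exact: fin_num_measure.
set ix := fine (\int[P1]_w (u0 (X w))%:E)%E.
set iy := fine (\int[P2]_w (u0 (Y w))%:E)%E.
pose eps := (a - b) / (`|ix - iy| + 1).
have eps0 : 0 < eps by rewrite divr_gt0 ?subr_gt0 // ltr_pwDr.
pose u := fun x : 'I_d -> R => - \1_D x + eps * u0 x.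
have hu : strictly_increasing u.
  move=> x y xy; rewrite /u; apply: ler_ltD; last first.
    by rewrite ltr_pM2l //; exact: u0_incr.
  rewrite lerN2 !indicE; case: (boolP (x \in D)) => hx.
    have hy : y \in D by apply: mem_set; apply: (down x y xy); exact: set_mem hx.
    by rewrite hy.
  by case: (y \in D).
have [iX eX] := int_u P1 mX eps mA.
have [iY eY] := int_u P2 mY eps mB.
have := H hu iX iY.
rewrite /u eX eY lte_fin -/a -/b -/ix -/iy => h.
have : eps * (ix - iy) > a - b by rewrite mulrBr; move: h; lra.
apply/negP; rewrite -leNgt.
apply: (le_trans (ler_wpM2l (ltW eps0) (ler_norm _))).
rewrite /eps mulrAC ler_pdivrMr ?ltr_pwDr //.
by apply: ler_wpM2l; [rewrite subr_ge0 ltW | rewrite lerDl].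
Qed.


Lemma fsd_v : fsd_vec P1 P2 X Y.
Proof.
have mP dT (T : measurableType dT) (Z : T -> 'I_d -> R) (v : 'I_d -> R) :
    (forall i, measurable_fun setT (fun w : T => Z w i)) ->
    measurable [set w | pareto_le (Z w) v].
  move=> mZ.
  rewrite (_ : [set w | pareto_le (Z w) v] =
     \bigcap_(i in [set: 'I_d]) [set w | Z w i <= v i]); last first.
    apply/seteqP; split => w /= h.
    - by move=> i _; exact: h.
    - by move=> i; exact: h.
  apply: fin_bigcap_measurable; first exact: finite_finset.
  by move=> i _; exact: mset.
move=> v; rewrite /cdf_vec.
apply: (key (D := fun x => pareto_le x v)); last 2 first.
- exact: mP.
- exact: mP.
by move=> x y [le _] hx i; exact: le_trans (le i) (hx i).
Qed.

Lemma fsd_r i : fsd_real P1 P2 (fun w => X w i) (fun w => Y w i).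
Proof.
move=> t; rewrite /cdf_real.
apply: (key (D := fun x => x i <= t)); last 2 first.
- exact: mset.
- exact: mset.
by move=> x y [le _] hx; exact: le_trans (le i) hx.
Qed.

Lemma main_res : dist_dom P1 P2 X Y.
Proof.
split; first exact: fsd_v.
have [//|] := pselect (exists i, sfsd_real P1 P2 (fun w => X w i) (fun w => Y w i)).
move=> /forallNP nsi; exfalso.
have eqc i t : P1 [set w | X w i <= t] = P2 [set w | Y w i <= t].
  apply/eqP; rewrite eq_le (fsd_r i t) /= leNgt; apply/negP => lt.
  by apply: (nsi i); split; [exact: fsd_r | exists t].
have eqA n : P1 (Aset X n) = P2 (Aset Y n).
  by rewrite /Aset; case: unpickle => [[i q]|]; [exact: eqc | rewrite !measure0].
have := H (@u0_incr R d) (int_u0 P1 mX) (int_u0 P2 mY).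
rewrite (int_u0E P1 mX) (int_u0E P2 mY).
rewrite (_ : (\sum_(n <oo) ((wt R n)%:E * P1 (Aset X n)))%E =
   (\sum_(n <oo) ((wt R n)%:E * P2 (Aset Y n)))%E); first by rewrite ltxx.
by congr (limn _); apply/funext => m; apply: eq_bigr => n _; rewrite eqA.
Qed.

End Main.

Unset Implicit Arguments. Set Strict Implicit.

Theorem theorem3p1 (R : realType) (dT1 dT2 : measure_display)
  (T1 : measurableType dT1) (T2 : measurableType dT2)
  (P1 : probability T1 R) (P2 : probability T2 R)
  (d : nat) (hd : (0 < d)%N)
  (X : T1 -> 'I_d -> R) (Y : T2 -> 'I_d -> R)
  (mX : forall i, measurable_fun setT (fun w => X w i))
  (mY : forall i, measurable_fun setT (fun w => Y w i))
  (H : forall u : ('I_d -> R) -> R, strictly_increasing u ->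
         P1.-integrable setT (fun w => (u (X w))%:E) ->
         P2.-integrable setT (fun w => (u (Y w))%:E) ->
         (\int[P1]_w (u (X w))%:E > \int[P2]_w (u (Y w))%:E)%E) :
  dist_dom P1 P2 X Y.
Proof. exact: (main_res mX mY H). Qed.
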